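(* Let $\bar f$ be interval Riemann integrable on $[a,b]$ and define $\bar F:[a,b]\to\mathbb{R}_\mathcal{I}$ by $\bar F(t)=(IR)\int_a^t\bar f(s)\,ds$. Then $\bar F$ is continuous on $[a,b]$, and $\bar F'(x)=\bar f(x)$ at every point $x$ at which $\bar f$ is continuous.
   Context: An interval number is a closed interval $\bar a=[a_l,a_r]$ with $a_l<a_r$ real; $\mathbb{R}_\mathcal{I}$ is the set of interval numbers. Write $a_c=(a_l+a_r)/2$, $a_w=(a_r-a_l)/2>0$, $\bar a=\langle a_c;a_w\rangle=[a_c-a_w,a_c+a_w]$. Operations: $\bar a+\bar b=\langle a_c+b_c;a_wb_w\rangle$, $\bar a-\bar b=\langle a_c-b_c;a_w/b_w\rangle$, $k\bar a=\langle ka_c;a_w^k\rangle$ for real $k$; for real $h\ne0$, $\bar c/h=\langle c_c/h;c_w^{1/h}\rangle$. Distance $d(\bar a,\bar b)=\sqrt{(a_c-b_c)^2+(\ln a_w-\ln b_w)^2}$; continuity and limits w.r.t. $d$. Derivative: $\bar F'(x)=\lim_{h\to0}\frac{\bar F(x+h)-\bar F(x)}{h}$. Interval Riemann integral: $\bar A=(IR)\int_a^b\bar f$ if for every $\varepsilon>0$ there is $\delta>0$ such that for every partition $a=t_0<\dots<t_n=b$ with mesh $<\delta$ and tags $\xi_i\in[t_{i-1},t_i]$, $d(\sum_i(t_i-t_{i-1})\bar f(\xi_i),\bar A)<\varepsilon$. *)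

(* Defs.v *)
From Stdlib Require Import Reals Lra Lia ClassicalEpsilon.
Open Scope R_scope.

(* Interval number a = <a_c; a_w> = [a_c - a_w, a_c + a_w], a_w > 0. *)
Record Inum : Type := mkInum { ic : R; iw : R; iw_pos : 0 < iw }.

Lemma Rpower_pos' (x y : R) : 0 < Rpower x y.
Proof. unfold Rpower; apply exp_pos. Qed.

Definition iadd (a b : Inum) : Inum :=
  mkInum (ic a + ic b) (iw a * iw b) (Rmult_lt_0_compat _ _ (iw_pos a) (iw_pos b)).

Definition isub (a b : Inum) : Inum :=
  mkInum (ic a - ic b) (iw a / iw b) (Rdiv_lt_0_compat _ _ (iw_pos a) (iw_pos b)).

Definition iscal (k : R) (a : Inum) : Inum :=
  mkInum (k * ic a) (Rpower (iw a) k) (Rpower_pos' _ _).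

(* c / h = <c_c / h; c_w^(1/h)>   (used for h <> 0) *)
Definition idiv (c : Inum) (h : R) : Inum :=
  mkInum (ic c / h) (Rpower (iw c) (1 / h)) (Rpower_pos' _ _).

Definition izero : Inum := mkInum 0 1 Rlt_0_1.

Definition idist (a b : Inum) : R :=
  sqrt ((ic a - ic b) ^ 2 + (ln (iw a) - ln (iw b)) ^ 2).

(* Riemann sum  sum_{i=1}^n (t_i - t_{i-1}) f(xi_i), here indexed from 0:
   sum_{i<n} (t (i+1) - t i) f (xi i). *)
Fixpoint riemann_sum (f : R -> Inum) (t xi : nat -> R) (n : nat) : Inum :=
  match n with
  | O => izero
  | S m => iadd (riemann_sum f t xi m) (iscal (t (S m) - t m) (f (xi m)))
  end.

Definition is_IRint (f : R -> Inum) (a b : R) (A : Inum) : Prop :=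
  forall eps : R, 0 < eps ->
  exists delta : R, 0 < delta /\
  forall (n : nat) (t xi : nat -> R),
    t O = a -> t n = b ->
    (forall i : nat, (i < n)%nat -> t i < t (S i)) ->
    (forall i : nat, (i < n)%nat -> t (S i) - t i < delta) ->
    (forall i : nat, (i < n)%nat -> t i <= xi i <= t (S i)) ->
    idist (riemann_sum f t xi n) A < eps.

Definition IR_integrable (f : R -> Inum) (a b : R) : Prop :=
  exists A, is_IRint f a b A.

(* The integral as a total function (chosen value if integrable). *)
Definition IRint (f : R -> Inum) (a b : R) : Inum :=
  epsilon (inhabits izero) (fun A => is_IRint f a b A).

Definition icont_within (F : R -> Inum) (a b x : R) : Prop :=
  forall eps : R, 0 < eps -> exists delta : R, 0 < delta /\
    forall y : R, a <= y <= b -> Rabs (y - x) < delta -> idist (F y) (F x) < eps.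

Definition iderive_within (F : R -> Inum) (a b x : R) (L : Inum) : Prop :=
  forall eps : R, 0 < eps -> exists delta : R, 0 < delta /\
    forall h : R, h <> 0 -> Rabs h < delta -> a <= x + h <= b ->
      idist (idiv (isub (F (x + h)) (F x)) h) L < eps.

(* Main.v *)
Require Import Defs.
From Stdlib Require Import Reals Lra Lia ClassicalEpsilon.
Open Scope R_scope.

Ltac rabs := unfold Rabs in *; repeat match goal with |- context [Rcase_abs ?x] => destruct (Rcase_abs x) | H : context [Rcase_abs ?x] |- _ => destruct (Rcase_abs x) end; lra.

Fixpoint rs (g : R -> R) (t xi : nat -> R) (n : nat) : R :=
  match n with O => 0 | S m => rs g t xi m + (t (S m) - t m) * g (xi m) end.

Definition part (a b : R) (n : nat) (t xi : nat -> R) (d : R) : Prop :=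
  t O = a /\ t n = b /\ (forall i, (i<n)%nat -> t i < t (S i)) /\
  (forall i, (i < n)%nat -> t (S i) - t i < d) /\
  (forall i, (i<n)%nat -> t i <= xi i <= t (S i)).

Definition is_rint (g : R -> R) (a b I : R) := forall eps, 0 < eps -> exists d, 0 < d /\
  forall n t xi, part a b n t xi d -> Rabs (rs g t xi n - I) < eps.

Lemma part_mono a b n t xi d : part a b n t xi d ->
  forall i j, (i <= j)%nat -> (j <= n)%nat -> t i <= t j.
Proof.
  intros (_ & _ & Hs & _ & _) i j H1.
  induction H1; intros H2. lra.
  specialize (Hs m ltac:(lia)). assert (t i <= t m) by (apply IHle; lia). lra.
Qed.

Lemma part_weaken a b n t xi d1 d2 : part a b n t xi d1 -> d1 <= d2 -> part a b n t xi d2.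
Proof.
  intros (A & B & C & D & E) Hd. repeat split; auto.
  intros i Hi. specialize (D i Hi). lra.
  apply E; auto. apply E; auto.
Qed.

Lemma part_trivial a n t xi d : part a a n t xi d -> n = 0%nat.
Proof.
  intros P. destruct n as [|n]; auto. exfalso.
  pose proof (part_mono _ _ _ _ _ _ P 0 n ltac:(lia) ltac:(lia)).
  destruct P as (A & B & C & _). specialize (C n ltac:(lia)). lra.
Qed.

Lemma rs_ext g t t' xi xi' n : (forall i, (i <= n)%nat -> t i = t' i) ->
  (forall i, (i < n)%nat -> xi i = xi' i) -> rs g t xi n = rs g t' xi' n.
Proof.
  induction n; intros H1 H2; simpl; auto.
  rewrite IHn by (intros; auto). rewrite !H1 by lia. rewrite H2 by lia. auto.
Qed.

Definition cat_t (n1 : nat) (t1 t2 : nat -> R) i := if (i <=? n1)%nat then t1 i else t2 (i - n1)%nat.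
Definition cat_x (n1 : nat) (x1 x2 : nat -> R) i := if (i <? n1)%nat then x1 i else x2 (i - n1)%nat.

Lemma cat_t_l n1 t1 t2 i : (i <= n1)%nat -> cat_t n1 t1 t2 i = t1 i.
Proof. intros H. unfold cat_t. rewrite (proj2 (Nat.leb_le _ _) H). auto. Qed.
Lemma cat_t_r n1 t1 t2 i : t1 n1 = t2 0%nat -> (n1 <= i)%nat -> cat_t n1 t1 t2 i = t2 (i - n1)%nat.
Proof. intros Hj H. unfold cat_t. destruct (Nat.leb_spec i n1); auto.
  assert (i = n1) by lia. subst. rewrite Nat.sub_diag. auto. Qed.
Lemma cat_x_l n1 t1 t2 i : (i < n1)%nat -> cat_x n1 t1 t2 i = t1 i.
Proof. intros H. unfold cat_x. destruct (Nat.ltb_spec i n1); auto; lia. Qed.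
Lemma cat_x_r n1 t1 t2 i : (n1 <= i)%nat -> cat_x n1 t1 t2 i = t2 (i - n1)%nat.
Proof. intros H. unfold cat_x. destruct (Nat.ltb_spec i n1); auto; lia. Qed.

Lemma rs_cat g n1 n2 t1 t2 x1 x2 : t1 n1 = t2 0%nat ->
  rs g (cat_t n1 t1 t2) (cat_x n1 x1 x2) (n1 + n2) = rs g t1 x1 n1 + rs g t2 x2 n2.
Proof.
  intros H. induction n2.
  - rewrite Nat.add_0_r. simpl. rewrite Rplus_0_r. apply rs_ext; intros.
    apply cat_t_l; lia. apply cat_x_l; lia.
  - rewrite Nat.add_succ_r. simpl. rewrite IHn2.
    rewrite !cat_t_r by first [exact H | lia]. rewrite cat_x_r by lia.
    replace (S (n1 + n2) - n1)%nat with (S n2) by lia.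
    replace (n1 + n2 - n1)%nat with n2 by lia. ring.
Qed.

Lemma part_cat a c d n1 n2 t1 t2 x1 x2 del :
  part a c n1 t1 x1 del -> part c d n2 t2 x2 del ->
  part a d (n1 + n2) (cat_t n1 t1 t2) (cat_x n1 x1 x2) del.
Proof.
  intros (A1&B1&C1&D1&E1) (A2&B2&C2&D2&E2).
  assert (Hj: t1 n1 = t2 0%nat) by congruence.
  split; [| split; [|split; [|split]]].
  - rewrite cat_t_l by lia; auto.
  - rewrite cat_t_r by first [exact Hj | lia]. replace (n1+n2-n1)%nat with n2 by lia; auto.
  - intros i Hi. destruct (Nat.lt_ge_cases i n1).
    + rewrite !cat_t_l by lia. auto.
    + rewrite !cat_t_r by first [exact Hj | lia].
      replace (S i - n1)%nat with (S (i - n1)) by lia. apply C2; lia.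
  - intros i Hi. destruct (Nat.lt_ge_cases i n1).
    + rewrite !cat_t_l by lia. auto.
    + rewrite !cat_t_r by first [exact Hj | lia].
      replace (S i - n1)%nat with (S (i - n1)) by lia. apply D2; lia.
  - intros i Hi. destruct (Nat.lt_ge_cases i n1).
    + rewrite !cat_t_l by lia. rewrite cat_x_l by lia. auto.
    + rewrite !cat_t_r by first [exact Hj | lia]. rewrite cat_x_r by lia.
      replace (S i - n1)%nat with (S (i - n1)) by lia. apply E2; lia.
Qed.

Lemma part_exists c d del : c <= d -> 0 < del -> exists n t xi, part c d n t xi del.
Proof.
  intros Hcd Hd. destruct (Req_dec c d) as [<-|Hne].
  - exists 0%nat, (fun _ => c), (fun _ => c). unfold part; repeat split; intros; lia.
  - destruct (archimed_cor1 (del / (d - c))) as [N [HN1 HN2]].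
    { apply Rdiv_lt_0_compat; lra. }
    assert (HNp : 0 < INR N) by (apply lt_0_INR; lia).
    set (h := (d - c) / INR N).
    assert (Hh : 0 < h) by (unfold h; apply Rdiv_lt_0_compat; lra).
    assert (Hhd : h < del).
    { unfold h. unfold Rdiv.
      apply Rmult_lt_compat_l with (r := d - c) in HN1; [|lra].
      replace ((d - c) * (del / (d - c))) with del in HN1 by (field; lra). lra. }
    exists N, (fun i => c + INR i * h), (fun i => c + INR i * h).
    unfold part; repeat split; intros.
    + simpl. ring.
    + unfold h. field. lra.
    + rewrite S_INR. lra.
    + rewrite S_INR. lra.
    + lra.
    + rewrite S_INR. lra.
Qed.

Lemma rint_cauchy g a b I : is_rint g a b I -> forall eps, 0 < eps -> exists del, 0 < del /\
  forall c, a <= c <= b -> forall n1 t1 x1 n2 t2 x2,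
  part a c n1 t1 x1 del -> part a c n2 t2 x2 del ->
  Rabs (rs g t1 x1 n1 - rs g t2 x2 n2) < 2 * eps.
Proof.
  intros HI eps He. destruct (HI eps He) as [del [Hdel H]]. exists del; split; auto.
  intros c Hc n1 t1 x1 n2 t2 x2 P1 P2.
  destruct (part_exists c b del) as (m & t3 & x3 & P3); try lra.
  pose proof (H _ _ _ (part_cat _ _ _ _ _ _ _ _ _ _ P1 P3)) as H1.
  pose proof (H _ _ _ (part_cat _ _ _ _ _ _ _ _ _ _ P2 P3)) as H2.
  rewrite rs_cat in H1, H2.
  - rabs.
  - destruct P2 as (_&B&_); destruct P3 as (A&_); congruence.
  - destruct P1 as (_&B&_); destruct P3 as (A&_); congruence.
Qed.

Fixpoint runmin (f : nat -> R) (k : nat) : R :=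
  match k with O => f O | S k' => Rmin (runmin f k') (f (S k')) end.

Lemma runmin_pos f k : (forall j, 0 < f j) -> 0 < runmin f k.
Proof. intros H; induction k; simpl; auto. apply Rmin_glb_lt; auto. Qed.

Lemma runmin_mono f j k : (j <= k)%nat -> runmin f k <= runmin f j.
Proof. induction 1. lra. simpl. pose proof (Rmin_l (runmin f m) (f (S m))). lra. Qed.

Lemma runmin_le f k : runmin f k <= f k.
Proof. destruct k; simpl. lra. apply Rmin_r. Qed.

Lemma small_inv eps : 0 < eps -> exists k : nat, 2 * / INR (S k) < eps.
Proof.
  intros He. destruct (archimed_cor1 (eps / 2)) as [N [H1 H2]]; [lra|].
  exists N. assert (0 < INR N) by (apply lt_0_INR; lia).
  assert (INR N < INR (S N)) by (apply lt_INR; lia).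
  assert (/ INR (S N) < / INR N) by (apply Rinv_lt_contravar; nra). lra.
Qed.

Lemma lim_le s u L r k : (forall m, (m >= k)%nat -> Rabs (s - u m) < r) -> Un_cv u L ->
  Rabs (s - L) <= r.
Proof.
  intros H Hc. destruct (Rle_dec (Rabs (s - L)) r) as [|Hn]; auto. exfalso.
  destruct (Hc (Rabs (s - L) - r)) as [N HN]; [lra|].
  specialize (HN (max N k) ltac:(lia)). specialize (H (max N k) ltac:(lia)).
  unfold R_dist in HN. rabs.
Qed.

Lemma rint_sub_exists g a b I : a < b -> is_rint g a b I ->
  forall c, a <= c <= b -> exists J, is_rint g a c J.
Proof.
  intros Hab HI c Hc.
  destruct (Req_dec a c) as [<-|Hne].
  { exists 0. intros eps He. exists 1. split; [lra|]. intros n t xi P.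
    assert (n = 0%nat) by (eapply part_trivial; eauto). subst n. simpl.
    rewrite Rminus_0_r, Rabs_R0; lra. }
  pose proof (rint_cauchy _ _ _ _ HI) as HC.
  assert (Hd: forall k : nat, exists del, 0 < del /\ forall n1 t1 x1 n2 t2 x2,
    part a c n1 t1 x1 del -> part a c n2 t2 x2 del ->
    Rabs (rs g t1 x1 n1 - rs g t2 x2 n2) < 2 * / INR (S k)).
  { intro k. destruct (HC (/ INR (S k))) as [del [Hdel H]].
    apply Rinv_0_lt_compat, lt_0_INR; lia.
    exists del; split; auto. intros; eapply H; eauto; lra. }
  destruct (choice _ Hd) as [del Hdel].
  set (D := runmin del).
  assert (HDp : forall k, 0 < D k) by (intro; apply runmin_pos; intro; apply Hdel).
  assert (Hs : forall k, exists s, exists n t xi, part a c n t xi (D k) /\ s = rs g t xi n).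
  { intro k. destruct (part_exists a c (D k)) as (n & t & xi & P); auto; try lra.
    exists (rs g t xi n), n, t, xi; auto. }
  destruct (choice _ Hs) as [s Hsp].
  assert (HDle : forall k m, (k <= m)%nat -> D m <= del k).
  { intros. unfold D. pose proof (runmin_mono del k m H). pose proof (runmin_le del k). lra. }
  assert (Hcs : forall k m1 m2, (k <= m1)%nat -> (k <= m2)%nat -> Rabs (s m1 - s m2) < 2 * / INR (S k)).
  { intros k m1 m2 H1 H2. destruct (Hsp m1) as (n1 & t1 & x1 & P1 & E1).
    destruct (Hsp m2) as (n2 & t2 & x2 & P2 & E2). rewrite E1, E2.
    apply (proj2 (Hdel k)); eapply part_weaken; eauto. }
  assert (Hcc : Cauchy_crit s).
  { intros eps He. destruct (small_inv eps He) as [k Hk]. exists k. intros m1 m2 H1 H2.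
    unfold R_dist. specialize (Hcs k m1 m2 ltac:(lia) ltac:(lia)). lra. }
  destruct (R_complete s Hcc) as [L HL].
  exists L. intros eps He. destruct (small_inv eps He) as [k Hk].
  exists (del k). split; [apply Hdel|]. intros n t xi P.
  assert (Rabs (rs g t xi n - L) <= 2 * / INR (S k)); [|lra].
  apply (lim_le _ s _ _ k); auto. intros m Hm.
  destruct (Hsp m) as (n1 & t1 & x1 & P1 & E1). rewrite E1.
  apply (proj2 (Hdel k)); auto. eapply part_weaken; eauto.
Qed.

Lemma rint_unique g a c I1 I2 : a <= c -> is_rint g a c I1 -> is_rint g a c I2 -> I1 = I2.
Proof.
  intros Hac H1 H2. destruct (Req_dec I1 I2) as [|Hn]; auto. exfalso.
  assert (He : 0 < Rabs (I1 - I2) / 2) by (apply Rdiv_lt_0_compat; [apply Rabs_pos_lt; lra| lra]).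
  destruct (H1 _ He) as [d1 [Hd1 K1]]. destruct (H2 _ He) as [d2 [Hd2 K2]].
  destruct (part_exists a c (Rmin d1 d2)) as (n & t & xi & P); auto.
  apply Rmin_glb_lt; auto.
  specialize (K1 n t xi (part_weaken _ _ _ _ _ _ _ P (Rmin_l _ _))).
  specialize (K2 n t xi (part_weaken _ _ _ _ _ _ _ P (Rmin_r _ _))).
  rabs.
Qed.

Lemma rint_key g a b I : is_rint g a b I -> forall eps, 0 < eps -> exists del, 0 < del /\
  forall c J, a <= c <= b -> is_rint g a c J -> forall n t xi, part a c n t xi del ->
  Rabs (rs g t xi n - J) <= 2 * eps.
Proof.
  intros HI eps He. destruct (rint_cauchy _ _ _ _ HI eps He) as [del [Hdel HC]].
  exists del; split; auto. intros c J Hc HJ n t xi P.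
  apply Rle_plus_epsilon. intros eta Heta.
  destruct (HJ eta Heta) as [d' [Hd' K]].
  destruct (part_exists a c (Rmin del d')) as (n' & t' & xi' & P'); try lra.
  apply Rmin_glb_lt; auto.
  specialize (K n' t' xi' (part_weaken _ _ _ _ _ _ _ P' (Rmin_r _ _))).
  specialize (HC c Hc _ _ _ _ _ _ P (part_weaken _ _ _ _ _ _ _ P' (Rmin_l _ _))).
  rabs.
Qed.

Lemma rint_diff g a b I Phi : is_rint g a b I -> (forall c, a <= c <= b -> is_rint g a c (Phi c)) ->
  forall eta, 0 < eta -> exists del, 0 < del /\ forall x y, a <= x -> x <= y -> y <= b ->
  forall n t xi, part x y n t xi del -> Rabs (Phi y - Phi x - rs g t xi n) <= eta.
Proof.
  intros HI HP eta He. destruct (rint_key _ _ _ _ HI (eta / 4)) as [del [Hdel K]]; [lra|].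
  exists del; split; auto. intros x y H1 H2 H3 n t xi Q.
  destruct (part_exists a x del) as (m & t0 & x0 & P); auto.
  pose proof (K x (Phi x) ltac:(lra) (HP x ltac:(lra)) _ _ _ P) as K1.
  pose proof (K y (Phi y) ltac:(lra) (HP y ltac:(lra)) _ _ _ (part_cat _ _ _ _ _ _ _ _ _ _ P Q)) as K2.
  rewrite rs_cat in K2.
  - rabs.
  - destruct P as (_&B&_); destruct Q as (A&_); congruence.
Qed.

Lemma rs_single g x y z : rs g (fun i => match i with O => x | _ => y end) (fun _ => z) 1 = (y - x) * g z.
Proof. simpl. ring. Qed.

Lemma part_single x y z del : x < y -> y - x < del -> x <= z <= y ->
  part x y 1 (fun i => match i with O => x | _ => y end) (fun _ => z) del.
Proof.
  intros. unfold part; split; [reflexivity|split; [reflexivity|]]. split; [|split]; intros j Hj; assert (j = 0%nat) by lia; subst; simpl; lra.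
Qed.

Lemma small_prod eps M u : 0 < eps -> 0 <= M -> 0 <= u -> u < eps / (2 * (M + 1)) -> u * M < eps / 2.
Proof.
  intros He HM Hu Hlt. set (q := eps / (2 * (M + 1))) in *.
  assert (q * (M + 1) = eps / 2) by (unfold q; field; lra).
  assert (u * M <= q * M) by (apply Rmult_le_compat_r; lra). nra.
Qed.

Lemma rint_cont g a b I Phi : is_rint g a b I -> (forall c, a <= c <= b -> is_rint g a c (Phi c)) ->
  forall x, a <= x <= b -> forall eps, 0 < eps -> exists del, 0 < del /\
  forall y, a <= y <= b -> Rabs (y - x) < del -> Rabs (Phi y - Phi x) < eps.
Proof.
  intros HI HP x Hx eps He. destruct (rint_diff _ _ _ _ _ HI HP (eps / 2)) as [d1 [Hd1 K]]; [lra|].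
  set (M := Rabs (g x)). assert (HM : 0 <= M) by apply Rabs_pos.
  assert (Hq : 0 < eps / (2 * (M + 1))) by (apply Rdiv_lt_0_compat; lra).
  exists (Rmin d1 (eps / (2 * (M + 1)))). split; [apply Rmin_glb_lt; auto|].
  intros y Hy Hyx.
  pose proof (Rmin_l d1 (eps / (2 * (M + 1)))). pose proof (Rmin_r d1 (eps / (2 * (M + 1)))).
  destruct (total_order_T y x) as [[Hlt|Heq]|Hgt].
  - rewrite Rabs_left in Hyx by lra.
    pose proof (K y x ltac:(lra) ltac:(lra) ltac:(lra) _ _ _ (part_single y x x d1 Hlt ltac:(lra) ltac:(lra))) as K1.
    rewrite rs_single in K1.
    assert (Rabs ((x - y) * g x) < eps / 2).
    { rewrite Rabs_mult, (Rabs_pos_eq (x - y)) by lra. apply small_prod; auto; unfold M in *; lra. }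
    rabs.
  - subst. rewrite Rminus_diag, Rabs_R0. lra.
  - rewrite Rabs_right in Hyx by lra.
    pose proof (K x y ltac:(lra) ltac:(lra) ltac:(lra) _ _ _ (part_single x y x d1 Hgt ltac:(lra) ltac:(lra))) as K1.
    rewrite rs_single in K1.
    assert (Rabs ((y - x) * g x) < eps / 2).
    { rewrite Rabs_mult, (Rabs_pos_eq (y - x)) by lra. apply small_prod; auto; unfold M in *; lra. }
    rabs.
Qed.

Lemma rs_tag_bound g n t xi K e : (forall i, (i < n)%nat -> t i <= t (S i)) ->
  (forall i, (i < n)%nat -> Rabs (g (xi i) - K) <= e) ->
  Rabs (rs g t xi n - (t n - t O) * K) <= e * (t n - t O).
Proof.
  induction n; intros H1 H2.
  - simpl. replace (0 - (t 0%nat - t 0%nat) * K) with 0 by ring. rewrite Rabs_R0.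
    replace (e * (t 0%nat - t 0%nat)) with 0 by ring. lra.
  - simpl. specialize (IHn ltac:(intros; apply H1; lia) ltac:(intros; apply H2; lia)).
    assert (H3 : Rabs ((t (S n) - t n) * (g (xi n) - K)) <= (t (S n) - t n) * e).
    { rewrite Rabs_mult, Rabs_pos_eq by (specialize (H1 n ltac:(lia)); lra).
      apply Rmult_le_compat_l. specialize (H1 n ltac:(lia)); lra. apply H2; lia. }
    replace (rs g t xi n + (t (S n) - t n) * g (xi n) - (t (S n) - t 0%nat) * K)
      with ((rs g t xi n - (t n - t 0%nat) * K) + (t (S n) - t n) * (g (xi n) - K)) by ring.
    pose proof (Rabs_triang (rs g t xi n - (t n - t 0%nat) * K) ((t (S n) - t n) * (g (xi n) - K))).
    nra.
Qed.

Lemma tags_in x y n t xi d : part x y n t xi d -> forall i, (i < n)%nat -> x <= xi i <= y.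
Proof.
  intros P i Hi. pose proof (part_mono _ _ _ _ _ _ P 0 i ltac:(lia) ltac:(lia)).
  pose proof (part_mono _ _ _ _ _ _ P (S i) n ltac:(lia) ltac:(lia)).
  destruct P as (A & B & _ & _ & E). specialize (E i Hi). subst. lra.
Qed.

Lemma rint_deriv g a b I Phi x : is_rint g a b I -> (forall c, a <= c <= b -> is_rint g a c (Phi c)) ->
  a <= x <= b ->
  (forall eps, 0 < eps -> exists del, 0 < del /\ forall y, a <= y <= b -> Rabs (y - x) < del -> Rabs (g y - g x) < eps) ->
  forall eps, 0 < eps -> exists del, 0 < del /\ forall h, h <> 0 -> Rabs h < del -> a <= x + h <= b ->
  Rabs ((Phi (x + h) - Phi x) / h - g x) < eps.
Proof.
  intros HI HP Hx Hc eps He. destruct (Hc (eps / 2)) as [del [Hdel Kc]]; [lra|].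
  exists del; split; auto. intros h Hh0 Hh Hxh.
  assert (Claim : Rabs (Phi (x + h) - Phi x - h * g x) <= eps / 2 * Rabs h).
  { apply Rle_plus_epsilon. intros eta Heta.
    destruct (rint_diff _ _ _ _ _ HI HP eta Heta) as [d' [Hd' K]].
    destruct (Rle_lt_dec 0 h) as [Hpos|Hneg].
    - assert (0 < h) by (destruct Hpos as [?|E]; [auto| symmetry in E; contradiction]). rewrite (Rabs_pos_eq h) in Hh |- * by lra.
      destruct (part_exists x (x + h) d') as (n & t & xi & Q); auto; try lra.
      specialize (K x (x + h) ltac:(lra) ltac:(lra) ltac:(lra) _ _ _ Q).
      assert (TB : Rabs (rs g t xi n - (t n - t O) * g x) <= eps / 2 * (t n - t O)).
      { apply rs_tag_bound.
        - intros i Hi. destruct Q as (_&_&C&_). specialize (C i Hi); lra.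
        - intros i Hi. pose proof (tags_in _ _ _ _ _ _ Q i Hi). apply Rlt_le, Kc. lra. rabs. }
      destruct Q as (A & B & _). rewrite A, B in TB.
      replace (x + h - x) with h in TB by ring. rabs.
    - rewrite (Rabs_left h) in Hh |- * by lra.
      destruct (part_exists (x + h) x d') as (n & t & xi & Q); auto; try lra.
      specialize (K (x + h) x ltac:(lra) ltac:(lra) ltac:(lra) _ _ _ Q).
      assert (TB : Rabs (rs g t xi n - (t n - t O) * g x) <= eps / 2 * (t n - t O)).
      { apply rs_tag_bound.
        - intros i Hi. destruct Q as (_&_&C&_). specialize (C i Hi); lra.
        - intros i Hi. pose proof (tags_in _ _ _ _ _ _ Q i Hi). apply Rlt_le, Kc. lra. rabs. }
      destruct Q as (A & B & _). rewrite A, B in TB.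
      replace (x - (x + h)) with (- h) in TB by ring. rabs. }
  replace ((Phi (x + h) - Phi x) / h - g x) with ((Phi (x + h) - Phi x - h * g x) * / h) by (field; auto).
  rewrite Rabs_mult, Rabs_inv.
  assert (0 < Rabs h) by (apply Rabs_pos_lt; auto).
  apply Rmult_le_compat_r with (r := / Rabs h) in Claim; [|left; apply Rinv_0_lt_compat; auto].
  replace (eps / 2 * Rabs h * / Rabs h) with (eps / 2) in Claim by (field; lra). lra.
Qed.

Lemma rsum_ic f t xi n : ic (riemann_sum f t xi n) = rs (fun s => ic (f s)) t xi n.
Proof. induction n; simpl; auto. rewrite IHn. reflexivity. Qed.

Lemma rsum_lw f t xi n : ln (iw (riemann_sum f t xi n)) = rs (fun s => ln (iw (f s))) t xi n.
Proof.
  induction n; simpl. apply ln_1.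
  rewrite ln_mult by (try apply iw_pos; apply Rpower_pos'). rewrite IHn.
  unfold Rpower. rewrite ln_exp. ring.
Qed.

Lemma idist_ic A B : Rabs (ic A - ic B) <= idist A B.
Proof.
  unfold idist. rewrite <- sqrt_Rsqr_abs. apply sqrt_le_1_alt. unfold Rsqr.
  pose proof (pow2_ge_0 (ln (iw A) - ln (iw B))). pose proof (pow2_ge_0 (ic A - ic B)).
  replace ((ic A - ic B) * (ic A - ic B)) with ((ic A - ic B) ^ 2) by ring. lra.
Qed.

Lemma idist_lw A B : Rabs (ln (iw A) - ln (iw B)) <= idist A B.
Proof.
  unfold idist. rewrite <- sqrt_Rsqr_abs. apply sqrt_le_1_alt. unfold Rsqr.
  pose proof (pow2_ge_0 (ln (iw A) - ln (iw B))). pose proof (pow2_ge_0 (ic A - ic B)).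
  replace ((ln (iw A) - ln (iw B)) * (ln (iw A) - ln (iw B))) with ((ln (iw A) - ln (iw B)) ^ 2) by ring. lra.
Qed.

Lemma idist_le A B : idist A B <= Rabs (ic A - ic B) + Rabs (ln (iw A) - ln (iw B)).
Proof.
  unfold idist. set (x := ic A - ic B). set (y := ln (iw A) - ln (iw B)).
  pose proof (Rabs_pos x). pose proof (Rabs_pos y).
  rewrite <- (sqrt_pow2 (Rabs x + Rabs y)) by lra. apply sqrt_le_1_alt.
  rewrite <- (pow2_abs x), <- (pow2_abs y). simpl. nra.
Qed.

Lemma IR_to_r f a b A : is_IRint f a b A ->
  is_rint (fun s => ic (f s)) a b (ic A) /\ is_rint (fun s => ln (iw (f s))) a b (ln (iw A)).
Proof.
  intros H. split; intros eps He; destruct (H eps He) as [d [Hd K]]; exists d; split; auto;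
  intros n t xi (P1 & P2 & P3 & P4 & P5); specialize (K n t xi P1 P2 P3 P4 P5).
  - rewrite <- rsum_ic. eapply Rle_lt_trans; [apply idist_ic|]; eauto.
  - rewrite <- rsum_lw. eapply Rle_lt_trans; [apply idist_lw|]; eauto.
Qed.

Lemma r_to_IR f a b c l : is_rint (fun s => ic (f s)) a b c -> is_rint (fun s => ln (iw (f s))) a b l ->
  is_IRint f a b (mkInum c (exp l) (exp_pos l)).
Proof.
  intros H1 H2 eps He.
  destruct (H1 (eps / 2)) as [d1 [Hd1 K1]]; [lra|].
  destruct (H2 (eps / 2)) as [d2 [Hd2 K2]]; [lra|].
  exists (Rmin d1 d2). split; [apply Rmin_glb_lt; auto|].
  intros n t xi P1 P2 P3 P4 P5.
  assert (P : part a b n t xi (Rmin d1 d2)) by (repeat split; auto; apply P5; auto).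
  specialize (K1 n t xi (part_weaken _ _ _ _ _ _ _ P (Rmin_l _ _))).
  specialize (K2 n t xi (part_weaken _ _ _ _ _ _ _ P (Rmin_r _ _))).
  eapply Rle_lt_trans; [apply idist_le|]. simpl. rewrite ln_exp, rsum_ic, rsum_lw. lra.
Qed.

Theorem theorem5p6 (f : R -> Inum) (a b : R) :
  a < b ->
  IR_integrable f a b ->
  (forall x : R, a <= x <= b -> icont_within (fun t => IRint f a t) a b x) /\
  (forall x : R, a <= x <= b -> icont_within f a b x ->
     iderive_within (fun t => IRint f a t) a b x (f x)).
Proof.
  intros Hab [A HA]. destruct (IR_to_r _ _ _ _ HA) as [Hc Hl].
  assert (Hex : forall c, a <= c <= b -> is_IRint f a c (IRint f a c)).
  { intros c Hcb.
    destruct (rint_sub_exists _ _ _ _ Hab Hc c Hcb) as [J1 HJ1].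
    destruct (rint_sub_exists _ _ _ _ Hab Hl c Hcb) as [J2 HJ2].
    unfold IRint; apply epsilon_spec. eexists; apply r_to_IR; eauto. }
  set (Pc := fun c => ic (IRint f a c)). set (Pl := fun c => ln (iw (IRint f a c))).
  assert (HPc : forall c, a <= c <= b -> is_rint (fun s => ic (f s)) a c (Pc c))
    by (intros; apply (IR_to_r _ _ _ _ (Hex c H))).
  assert (HPl : forall c, a <= c <= b -> is_rint (fun s => ln (iw (f s))) a c (Pl c))
    by (intros; apply (IR_to_r _ _ _ _ (Hex c H))).
  split.
  - intros x Hx eps He.
    destruct (rint_cont _ _ _ _ _ Hc HPc x Hx (eps / 2)) as [d1 [Hd1 K1]]; [lra|].
    destruct (rint_cont _ _ _ _ _ Hl HPl x Hx (eps / 2)) as [d2 [Hd2 K2]]; [lra|].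
    exists (Rmin d1 d2). split; [apply Rmin_glb_lt; auto|]. intros y Hy Hyx.
    specialize (K1 y Hy (Rlt_le_trans _ _ _ Hyx (Rmin_l _ _))).
    specialize (K2 y Hy (Rlt_le_trans _ _ _ Hyx (Rmin_r _ _))).
    eapply Rle_lt_trans; [apply idist_le|]. unfold Pc, Pl in *. lra.
  - intros x Hx Hcont eps He.
    assert (Cc : forall e, 0 < e -> exists del, 0 < del /\ forall y, a <= y <= b -> Rabs (y - x) < del ->
      Rabs (ic (f y) - ic (f x)) < e).
    { intros e Hee. destruct (Hcont e Hee) as [d [Hd K]]. exists d; split; auto.
      intros. eapply Rle_lt_trans; [apply idist_ic|]; auto. }
    assert (Cl : forall e, 0 < e -> exists del, 0 < del /\ forall y, a <= y <= b -> Rabs (y - x) < del ->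
      Rabs (ln (iw (f y)) - ln (iw (f x))) < e).
    { intros e Hee. destruct (Hcont e Hee) as [d [Hd K]]. exists d; split; auto.
      intros. eapply Rle_lt_trans; [apply idist_lw|]; auto. }
    destruct (rint_deriv _ _ _ _ _ x Hc HPc Hx Cc (eps / 2)) as [d1 [Hd1 K1]]; [lra|].
    destruct (rint_deriv _ _ _ _ _ x Hl HPl Hx Cl (eps / 2)) as [d2 [Hd2 K2]]; [lra|].
    exists (Rmin d1 d2). split; [apply Rmin_glb_lt; auto|]. intros h Hh0 Hh Hxh.
    specialize (K1 h Hh0 (Rlt_le_trans _ _ _ Hh (Rmin_l _ _)) Hxh).
    specialize (K2 h Hh0 (Rlt_le_trans _ _ _ Hh (Rmin_r _ _)) Hxh).
    eapply Rle_lt_trans; [apply idist_le|].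
    assert (E : ln (iw (idiv (isub (IRint f a (x + h)) (IRint f a x)) h)) = (Pl (x + h) - Pl x) / h).
    { simpl. unfold Rpower. rewrite ln_exp. unfold Rdiv.
      rewrite ln_mult, ln_Rinv by (try apply Rinv_0_lt_compat; apply iw_pos).
      unfold Pl. field. auto. }
    rewrite E. simpl. unfold Pc in K1. lra.
Qed.
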